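(* Let $d\in T^{W_P}$, $q=\alpha_1(d)$, and $z\in Z_d$ with $z=u_1\dot w_Pd\bar u_2$, $u_1\in U_+\cap\dot w_PU_+\dot w_P^{-1}$, $\bar u_2\in U_-$, where $\bar u_2=y_1(a_1)\cdots y_{m-1}(a_{m-1})y_m(c)y_{m-1}(b_{m-1})\cdots y_1(b_1)$ with all $a_i,c,b_i\neq0$. Then $$\mathcal F_d(\pi_R(z))=a_1+\dots+a_{m-1}+c+b_{m-1}+\dots+b_1+q\,\frac{a_1+b_1}{a_1\cdots a_{m-1}\,c\,b_{m-1}\cdots b_1}.$$
   Context: Fix an integer $m\ge 2$. Let $V=\mathbb C^{2m}$ and let $J$ be the $2m\times 2m$ matrix with $J_{i,2m+1-i}=(-1)^i$ for $1\le i\le 2m$ and all other entries $0$. Let $G=\mathrm{PSp}(V,J)\cong\mathrm{PSp}_{2m}(\mathbb C)$, whose elements are represented by matrices. Let $E_{i,j}$ denote matrix units, $e_i=E_{i,i+1}+E_{2m-i,2m-i+1}$ for $1\le i\le m-1$, $e_m=E_{m,m+1}$, $f_i=e_i^{T}$, $x_i(a)=\exp(ae_i)$, $y_i(a)=\exp(af_i)$. Let $B_+=TU_+$ and $B_-=TU_-$ be the upper resp. lower triangular elements of $G$, with $U_\pm$ their unipotent radicals and $T$ the diagonal elements $(d_{ij})$ with $d_{ii}=d_{2m+1-i,2m+1-i}^{-1}$. The Weyl group $W$ is generated by $s_1,\dots,s_m$ with representatives $\dot s_i=y_i(-1)x_i(1)y_i(-1)$; for $w=s_{i_1}\cdots s_{i_k}$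 reduced, $\dot w=\dot s_{i_1}\cdots\dot s_{i_k}$. Let $W_P=\langle s_2,\dots,s_m\rangle$, $w_P$ its longest element, $w_0$ the longest element of $W$. Let $T^{W_P}$ be the $W_P$-fixed part of $T$, and $\alpha_1(d)=d_{11}/d_{22}$. For $d\in T^{W_P}$ let $Z_d=B_-\dot w_0\cap U_+d\dot w_PU_-$. The open Richardson variety is $\mathcal R=(B_+\dot w_PB_-\cap B_-\dot w_0B_-)/B_-\subset G/B_-$, and $\pi_R:Z_d\to\mathcal R$, $z\mapsto zB_-$, is an isomorphism. Each $z\in Z_d$ is written uniquely as $z=u_1\dot w_Pd\bar u_2$ with $u_1\in U_+\cap\dot w_PU_+\dot w_P^{-1}$ and $\bar u_2\in U_-$. For $u\in U_+$ put $e_i^*(u)=u_{i,i+1}$, and for $\bar u\in U_-$ put $f_i^*(\bar u)=\bar u_{i+1,i}$. The superpotential is $\mathcal F_d(\pi_R(z))=\sum_{i=1}^m e_i^*(u_1)+\sum_{i=1}^m f_i^*(\bar u_2)$. *)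

(* Defs.v *)
(* Matrices in Sp_{2m} over a numeric closed field F
   (the MathComp stand-in for C).  Indices are 1-based via [ent1]. *)
From HB Require Import structures.
From mathcomp Require Import all_boot all_order all_algebra.
Set Implicit Arguments. Unset Strict Implicit. Unset Printing Implicit Defensive.
Import Order.TTheory GRing.Theory Num.Theory.
Local Open Scope ring_scope.

Section PSp.
Variables (F : fieldType) (m : nat).
Notation n := (m.*2).
Notation M := 'M[F]_n.

(* entry (i,j) of a matrix, 0-based nat indices, 0 outside the range *)
Definition ent (A : M) (i j : nat) : F :=
  match @insub _ (fun k => k < n)%N _ i, @insub _ (fun k => k < n)%N _ j with
  | Some i', Some j' => A i' j'
  | _, _ => 0
  end.
Definition ent1 (A : M) (i j : nat) : F := ent A i.-1 j.-1.

Definition Emx (i j : nat) : M :=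
  \matrix_(r, s) (((r.+1 == i) && (s.+1 == j))%N)%:R.

Definition Jmx : M :=
  \matrix_(r, s) (if (r.+1 + s.+1 == n.+1)%N then (-1) ^+ r.+1 else 0).

Definition e_gen (i : nat) : M :=
  if (i < m)%N then Emx i i.+1 + Emx (n - i) (n - i).+1 else Emx m m.+1.
Definition f_gen (i : nat) : M := (e_gen i)^T.

(* matrix powers and the exponential; the exponential series of a matrix N
   with N^(2m) = 0 (nilpotent of size 2m) is the finite sum below *)
Definition mxpow (k : nat) (N : M) : M := iter k (mulmx N) 1%:M.
Definition mexp (N : M) : M := \sum_(k < n) (k`!%:R)^-1 *: mxpow k N.

Definition x_gen (i : nat) (a : F) : M := mexp (a *: e_gen i).
Definition y_gen (i : nat) (a : F) : M := mexp (a *: f_gen i).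

Definition sdot (i : nat) : M := y_gen i (-1) *m x_gen i 1 *m y_gen i (-1).
(* representative of a Weyl group element given by a (reduced) word *)
Definition wdot (w : seq nat) : M := foldr (fun i A => sdot i *m A) 1%:M w.

(* reduced word (s_1 ... s_m)^m for the longest element w_0 of W (type C_m) *)
Definition w0_word : seq nat := flatten (nseq m (iota 1 m)).
(* reduced word (s_2 ... s_m)^(m-1) for the longest element w_P of
   W_P = <s_2,...,s_m> (type C_{m-1}) *)
Definition wP_word : seq nat := flatten (nseq m.-1 (iota 2 m.-1)).
Definition w0dot : M := wdot w0_word.
Definition wPdot : M := wdot wP_word.

Definition in_Sp (A : M) : bool := A^T *m Jmx *m A == Jmx.
Definition upper_tri (A : M) : bool := [forall i : 'I_n, forall j : 'I_n, (j < i)%N ==> (A i j == 0)].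
Definition lower_tri (A : M) : bool := [forall i : 'I_n, forall j : 'I_n, (i < j)%N ==> (A i j == 0)].
Definition unitri_diag (A : M) : bool := [forall i : 'I_n, A i i == 1].
Definition in_Uplus (A : M) : bool := [&& in_Sp A, upper_tri A & unitri_diag A].
Definition in_Uminus (A : M) : bool := [&& in_Sp A, lower_tri A & unitri_diag A].
Definition in_T (d : M) : bool :=
  [forall i : 'I_n, forall j : 'I_n, (i != j) ==> (d i j == 0)] &&
  [forall i : 'I_n, d i i * ent d (n - i.+1) (n - i.+1) == 1].
(* W_P-fixed part of T: d is fixed (in PSp, i.e. up to the sign -1) under
   the action of the generators s_2,...,s_m of W_P *)
Definition in_TWP (d : M) : bool :=
  in_T d && all (fun i => (sdot i *m d == d *m sdot i)
                          || (sdot i *m d == - (d *m sdot i))) (iota 2 m.-1).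
Definition alpha1 (d : M) : F := ent1 d 1 1 / ent1 d 2 2.

Definition ubar2_of (a : nat -> F) (c : F) (b : nat -> F) : M :=
  foldr (fun i A => y_gen i (a i) *m A)
    (y_gen m c *m foldr (fun i A => y_gen i (b i) *m A) 1%:M (rev (iota 1 m.-1)))
    (iota 1 m.-1).

(* superpotential F_d(pi_R(z)) for z = u1 wP d ubar2 *)
Definition superpot (u1 ubar2 : M) : F :=
  \sum_(1 <= i < m.+1) ent1 u1 i i.+1 + \sum_(1 <= i < m.+1) ent1 ubar2 i.+1 i.

End PSp.

(* Main.v *)
Require Import Defs.
From HB Require Import structures.
From mathcomp Require Import all_boot all_order all_algebra zify ring.
Set Implicit Arguments. Unset Strict Implicit. Unset Printing Implicit Defensive.
Import Order.TTheory GRing.Theory Num.Theory.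
Local Open Scope ring_scope.

Ltac simpl_eqs := repeat match goal with
  | |- context [(?x == ?y)%N] =>
    first [ rewrite (_ : (x == y)%N = false); last (apply/negbTE/eqP; lia)
          | rewrite (_ : (x == y)%N = true); last (apply/eqP; lia) ] end.
Ltac vsimp := rewrite ?mulr0n ?mulr1n ?scale0r ?scale1r ?scaler0 ?addr0 ?add0r ?mulr0 ?mul0r ?mulr1 ?mul1r ?scaler0 ?addr0 ?add0r.
Ltac ifs := repeat (first [ match goal with H : context [if _ then _ else _] |- _ => move: H end | case: ifP => ? ]); intros; (try lia); try done.

Section Infra.
Variables (F : numClosedFieldType) (m : nat).
Local Notation n := (m.*2).
Local Notation M := 'M[F]_n.

Definition ecol (j : nat) : 'cV[F]_n := \col_r ((r.+1 == j)%:R).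
Definition colent (v : 'cV[F]_n) (i : nat) : F := \sum_(r < n) (r.+1 == i)%:R * v r 0.

Lemma ent_ord (A : M) (r s : 'I_n) : ent A r s = A r s.
Proof.
rewrite /ent (insubT (fun k => k < n)%N (ltn_ord r)) (insubT (fun k => k < n)%N (ltn_ord s)).
by congr (A _ _); apply: val_inj.
Qed.

Lemma ent1_ord (A : M) (r s : 'I_n) : ent1 A r.+1 s.+1 = A r s.
Proof. by rewrite /ent1 /= ent_ord. Qed.

Lemma ordP_nat i : (1 <= i <= n)%N -> exists r : 'I_n, i = r.+1.
Proof.
move=> Hi; have Hr : (i.-1 < n)%N by lia.
by exists (Ordinal Hr) => /=; lia.
Qed.

Lemma colent_ord (v : 'cV[F]_n) (r : 'I_n) : colent v r.+1 = v r 0.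
Proof.
rewrite /colent (bigD1 r) //= eqxx mul1r big1 ?addr0 // => k Hk.
by rewrite eqSS (negbTE (Hk : (k:nat) != r)) mul0r.
Qed.

Lemma colentD u v i : colent (u + v) i = colent u i + colent v i.
Proof. by rewrite /colent -big_split; apply: eq_bigr => k _; rewrite mxE mulrDr. Qed.
Lemma colentZ (x : F) v i : colent (x *: v) i = x * colent v i.
Proof. by rewrite /colent mulr_sumr; apply: eq_bigr => k _; rewrite mxE mulrCA. Qed.
Lemma colentN v i : colent (- v) i = - colent v i.
Proof. by rewrite -scaleN1r colentZ mulN1r. Qed.
Lemma colent0 i : colent 0 i = 0.
Proof. by rewrite /colent big1 // => k _; rewrite mxE mulr0. Qed.

Lemma colent_ecol i k : (1 <= i <= n)%N -> colent (ecol k) i = (i == k)%:R.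
Proof. by move=> /ordP_nat [r ->]; rewrite colent_ord mxE. Qed.

Lemma mul_ecol_ord (A : M) (r s : 'I_n) : (A *m ecol s.+1) r 0 = A r s.
Proof.
rewrite mxE (bigD1 s) //= mxE eqxx mulr1 big1 ?addr0 // => k Hk.
by rewrite mxE eqSS (negbTE (Hk : (k:nat) != s)) mulr0.
Qed.

Lemma ent1_col (A : M) i j : (1 <= i <= n)%N -> (1 <= j <= n)%N ->
  ent1 A i j = colent (A *m ecol j) i.
Proof.
move=> /ordP_nat [r ->] /ordP_nat [s ->].
by rewrite ent1_ord colent_ord mul_ecol_ord.
Qed.

Lemma mx_ext (A B : M) : (forall j, (1 <= j <= n)%N -> A *m ecol j = B *m ecol j) -> A = B.
Proof.
move=> H; apply/matrixP => r s.
have /(congr1 (fun v : 'cV_n => v r 0)) := H s.+1 (ltn_ord s).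
by rewrite !mul_ecol_ord.
Qed.

Lemma Emx_ecol p q j : (1 <= j <= n)%N ->
  Emx F m p q *m ecol j = (q == j)%:R *: ecol p.
Proof.
move=> /ordP_nat [s ->]; apply/colP => r.
rewrite mul_ecol_ord !mxE.
by case: (r.+1 == p); case: (s.+1 == q) (eq_sym q s.+1) => -> ; rewrite ?mulr1 ?mulr0.
Qed.

Lemma Emx_tr p q : (Emx F m p q)^T = Emx F m q p.
Proof. by apply/matrixP => r s; rewrite !mxE andbC. Qed.



Lemma e_act i j : (1 <= j <= n)%N -> e_gen F m i *m ecol j =
  if (i < m)%N then (i.+1 == j)%:R *: ecol i + ((n - i)%N.+1 == j)%:R *: ecol (n - i)%N
  else (m.+1 == j)%:R *: ecol m.
Proof.
move=> Hj; rewrite /e_gen; case: ifP => _; last by rewrite Emx_ecol.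
by rewrite mulmxDl !Emx_ecol.
Qed.

Lemma f_act i j : (1 <= j <= n)%N -> f_gen F m i *m ecol j =
  if (i < m)%N then (i == j)%:R *: ecol i.+1 + ((n - i)%N == j)%:R *: ecol (n - i)%N.+1
  else (m == j)%:R *: ecol m.+1.
Proof.
move=> Hj; rewrite /f_gen /e_gen; case: ifP => _; last by rewrite Emx_tr Emx_ecol.
by rewrite linearD /= !Emx_tr mulmxDl !Emx_ecol.
Qed.

Lemma ff0 i : (1 <= i <= m)%N -> f_gen F m i *m f_gen F m i = 0.
Proof.
move=> Hi; apply: mx_ext => j Hj; rewrite mul0mx -mulmxA f_act //.
case: ifP => Him.
  rewrite mulmxDr -!scalemxAr !f_act; try lia; rewrite Him.
  simpl_eqs; by vsimp.
rewrite -!scalemxAr !f_act; try lia; rewrite Him.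
simpl_eqs; by vsimp.
Qed.

Lemma ee0 i : (1 <= i <= m)%N -> e_gen F m i *m e_gen F m i = 0.
Proof.
move=> Hi; apply: mx_ext => j Hj; rewrite mul0mx -mulmxA e_act //.
case: ifP => Him.
  rewrite mulmxDr -!scalemxAr !e_act; try lia; rewrite Him.
  simpl_eqs; by vsimp.
rewrite -!scalemxAr !e_act; try lia; rewrite Him.
simpl_eqs; by vsimp.
Qed.

Lemma mxpow_nil (N : M) k : N *m N = 0 -> (2 <= k)%N -> mxpow k N = 0.
Proof.
move=> HN; elim: k => [//|k IH] Hk.
have [->|Hk2] := eqVneq k 1%N; first by rewrite /mxpow /= mulmx1.
by rewrite /mxpow iterS -/(mxpow k N) IH ?mulmx0 //; lia.
Qed.

Lemma mexp_nil (N : M) : N *m N = 0 -> (1 <= m)%N -> mexp N = 1%:M + N.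
Proof.
move=> HN Hm; rewrite /mexp -(big_mkord xpredT (fun k => (k`!%:R)^-1 *: mxpow k N)).
rewrite big_ltn; last lia. rewrite big_ltn; last lia.
rewrite big1_seq ?addr0; last first.
  move=> k /andP [_]; rewrite mem_index_iota => /andP [Hk _]; by rewrite mxpow_nil ?scaler0.
by rewrite /= invr1 !scale1r /mxpow /= mulmx1.
Qed.

Lemma y_genE i x : (1 <= i <= m)%N -> y_gen m i x = 1%:M + x *: f_gen F m i.
Proof.
move=> Hi; rewrite /y_gen mexp_nil //; last lia.
by rewrite -scalemxAl -scalemxAr ff0 // !scaler0.
Qed.

Lemma x_genE i x : (1 <= i <= m)%N -> x_gen m i x = 1%:M + x *: e_gen F m i.
Proof.
move=> Hi; rewrite /x_gen mexp_nil //; last lia.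
by rewrite -scalemxAl -scalemxAr ee0 // !scaler0.
Qed.

Lemma mul1N (N : M) (x : F) (u : 'cV[F]_n) : (1%:M + x *: N) *m u = u + x *: (N *m u).
Proof. by rewrite mulmxDl mul1mx -scalemxAl. Qed.

Lemma sdot_gen (e f : M) (v w : 'cV[F]_n) :
  f *m v = w -> f *m w = 0 -> e *m v = 0 -> e *m w = v ->
  ((1%:M + (-1) *: f) *m (1%:M + 1 *: e) *m (1%:M + (-1) *: f)) *m v = - w /\
  ((1%:M + (-1) *: f) *m (1%:M + 1 *: e) *m (1%:M + (-1) *: f)) *m w = v.
Proof.
move=> fv fw ev ew; rewrite -!mulmxA !mul1N fv fw scaler0 addr0 scale1r scaleN1r.
rewrite !mulmxBr ev ew scale1r sub0r.
have E : v - w - v = - w by rewrite addrAC subrr add0r.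
rewrite E mulmxN fw oppr0 scaler0 addr0 mulmxDr fw fv add0r scaleN1r. by split=> //; rewrite addrC addKr.
Qed.

Lemma sdot_fix (e f : M) (u : 'cV[F]_n) :
  f *m u = 0 -> e *m u = 0 ->
  ((1%:M + (-1) *: f) *m (1%:M + 1 *: e) *m (1%:M + (-1) *: f)) *m u = u.
Proof.
move=> fu eu; rewrite -!mulmxA !mul1N fu scaler0 addr0 eu scaler0 addr0 fu scaler0 addr0 //.
Qed.


Definition sp (i j : nat) : nat :=
  if (i < m)%N then
    (if j == i then i.+1 else if j == i.+1 then i else
     if j == (n - i)%N then (n - i).+1 else if j == (n - i).+1 then (n - i)%N else j)
  else (if j == m then m.+1 else if j == m.+1 then m else j).
Definition ss (i j : nat) : F :=
  if (i < m)%N then (if (j == i) || (j == (n - i)%N) then -1 else 1)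
  else (if j == m then -1 else 1).

Ltac acttac Him := rewrite ?f_act ?e_act; (try lia); rewrite ?Him; simpl_eqs; vsimp.

Lemma sdot_act i j : (1 <= i <= m)%N -> (1 <= j <= n)%N ->
  sdot F m i *m ecol j = ss i j *: ecol (sp i j).
Proof.
move=> Hi Hj; rewrite /sdot !y_genE ?x_genE //.
rewrite /ss /sp; case: ifP => Him.
  have [->|Hji] := eqVneq j i.
    have [H1 _] := @sdot_gen (e_gen F m i) (f_gen F m i) (ecol i) (ecol i.+1)
      ltac:(by acttac Him) ltac:(by acttac Him) ltac:(by acttac Him) ltac:(by acttac Him).
    by rewrite H1; simpl_eqs; rewrite /= scaleN1r.
  have [->|Hji1] := eqVneq j i.+1.
    have [_ H1] := @sdot_gen (e_gen F m i) (f_gen F m i) (ecol i) (ecol i.+1)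
      ltac:(by acttac Him) ltac:(by acttac Him) ltac:(by acttac Him) ltac:(by acttac Him).
    by rewrite H1; simpl_eqs; rewrite /= scale1r.
  have [->|Hjn] := eqVneq j (n - i)%N.
    have [H1 _] := @sdot_gen (e_gen F m i) (f_gen F m i) (ecol (n - i)) (ecol (n - i).+1)
      ltac:(by acttac Him) ltac:(by acttac Him) ltac:(by acttac Him) ltac:(by acttac Him).
    by rewrite H1; simpl_eqs; rewrite /= scaleN1r.
  have [->|Hjn1] := eqVneq j (n - i).+1.
    have [_ H1] := @sdot_gen (e_gen F m i) (f_gen F m i) (ecol (n - i)) (ecol (n - i).+1)
      ltac:(by acttac Him) ltac:(by acttac Him) ltac:(by acttac Him) ltac:(by acttac Him).
    by rewrite H1; simpl_eqs; rewrite /= scale1r.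
  rewrite sdot_fix; first (simpl_eqs; by rewrite /= scale1r).
    by acttac Him.
  by acttac Him.
have Him' : i = m by lia.
have [->|Hji] := eqVneq j m.
  have [H1 _] := @sdot_gen (e_gen F m i) (f_gen F m i) (ecol m) (ecol m.+1)
    ltac:(by acttac Him) ltac:(by acttac Him) ltac:(by acttac Him) ltac:(by acttac Him).
  by rewrite H1; simpl_eqs; rewrite /= scaleN1r.
have [->|Hjm1] := eqVneq j m.+1.
  have [_ H1] := @sdot_gen (e_gen F m i) (f_gen F m i) (ecol m) (ecol m.+1)
    ltac:(by acttac Him) ltac:(by acttac Him) ltac:(by acttac Him) ltac:(by acttac Him).
  by rewrite H1; simpl_eqs; rewrite /= scale1r.
rewrite sdot_fix; first (simpl_eqs; by rewrite /= scale1r).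
  by acttac Him.
by acttac Him.
Qed.


Definition nx (t j : nat) : nat :=
  if (j < t)%N then j else if (j < m)%N then j.+1 else if j == m then (n.+1 - t)%N
  else if j == m.+1 then t else if (j <= n.+1 - t)%N then j.-1 else j.
Definition sg (t j : nat) : F :=
  if (j < t)%N then 1 else if (j < m)%N then -1 else if j == m then (-1) ^+ (m - t).+1 else 1.


Lemma nx_range t j : (1 <= t <= m)%N -> (1 <= j <= n)%N -> (1 <= nx t j <= n)%N.
Proof. move=> Ht Hj; rewrite /nx; ifs. Qed.

Lemma wdot_cons i w : wdot F m (i :: w) = sdot F m i *m wdot F m w.
Proof. by []. Qed.

Lemma cox_act t j : (1 <= t <= m)%N -> (1 <= j <= n)%N ->
  wdot F m (iota t (m - t).+1) *m ecol j = sg t j *: ecol (nx t j).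
Proof.
move=> Ht Hj; remember (m - t)%N as k eqn:Ek; elim: k t Ht Ek j Hj => [|k IH] t Ht Ek j Hj.
  have -> : t = m by lia.
  rewrite /= mulmx1 sdot_act //; last lia.
  congr (_ *: ecol _); rewrite /ss /sp /sg /nx; ifs; by rewrite subnn expr1.
rewrite -[iota _ _]/(t :: iota t.+1 k.+1) wdot_cons -mulmxA IH; try lia.
rewrite -scalemxAr sdot_act; last (apply: nx_range; lia); last lia.
rewrite scalerA; congr (_ *: ecol _).
  have E : (m - t = (m - t.+1).+1)%N by lia.
  rewrite /ss /sp /sg /nx E; ifs; rewrite ?mulr1 ?mul1r ?mulrN1 ?opprK //.
  by rewrite [in RHS]exprS mulN1r.
rewrite /ss /sp /sg /nx; ifs.
Qed.


Lemma wdot_cat w1 w2 : wdot F m (w1 ++ w2) = wdot F m w1 *m wdot F m w2.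
Proof.
elim: w1 => [|i w1 IH] /=; first by rewrite mul1mx.
by rewrite IH mulmxA.
Qed.

Fixpoint sgp (σ : nat -> F) (g : nat -> nat) (k j : nat) : F :=
  if k is k'.+1 then σ (iter k' g j) * sgp σ g k' j else 1.

Lemma iter_range (g : nat -> nat) k j :
  (forall j, (1 <= j <= n)%N -> (1 <= g j <= n)%N) -> (1 <= j <= n)%N ->
  (1 <= iter k g j <= n)%N.
Proof. move=> Hg Hj; elim: k => [//|k IH]; rewrite iterS; exact: Hg. Qed.

Lemma pow_act w (σ : nat -> F) (g : nat -> nat) k j :
  (forall j, (1 <= j <= n)%N -> wdot F m w *m ecol j = σ j *: ecol (g j)) ->
  (forall j, (1 <= j <= n)%N -> (1 <= g j <= n)%N) -> (1 <= j <= n)%N ->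
  wdot F m (flatten (nseq k w)) *m ecol j = sgp σ g k j *: ecol (iter k g j).
Proof.
move=> Hw Hg Hj; elim: k => [|k IH]; first by rewrite /= mul1mx scale1r.
rewrite [flatten _]/= wdot_cat -mulmxA IH -scalemxAr Hw; last exact: iter_range.
by rewrite scalerA mulrC iterS.
Qed.

Lemma nx_up t k j : (t <= j)%N -> (j + k <= m)%N -> iter k (nx t) j = (j + k)%N.
Proof.
move=> H1; elim: k => [|k IH] H2; first by rewrite addn0.
rewrite iterS IH; last lia. rewrite /nx; ifs.
Qed.

Lemma nx_down t k j : (m.+1 + k <= j)%N -> (j <= n.+1 - t)%N -> iter k (nx t) j = (j - k)%N.
Proof.
move=> H1 H2; elim: k H1 => [|k IH] H1; first by rewrite subn0.
rewrite iterS IH; last lia. rewrite /nx; ifs.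
Qed.

Lemma nx_lo t k j : (j < t)%N -> iter k (nx t) j = j.
Proof. move=> H; elim: k => [//|k IH]; rewrite iterS IH /nx; ifs. Qed.

Lemma nx_hi t k j : (1 <= t)%N -> (n.+1 - t < j)%N -> iter k (nx t) j = j.
Proof. move=> H0 H; elim: k => [//|k IH]; rewrite iterS IH /nx; ifs. Qed.

Lemma nx_full t j : (1 <= t <= m)%N -> (t <= j <= n.+1 - t)%N ->
  iter (m - t).+1 (nx t) j = (n.+1 - j)%N.
Proof.
move=> Ht Hj; case: (leqP j m) => Hjm.
  have -> : (m - t).+1 = ((j - t) + (1 + (m - j)))%N by lia.
  rewrite !iterD (@nx_up t (m - j) j); try lia.
  have -> : (j + (m - j))%N = m by lia.
  rewrite /= {2}/nx; ifs. rewrite nx_down; lia.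
have -> : (m - t).+1 = ((m - t).+1 - (j - m) + (1 + (j - m.+1)))%N by lia.
rewrite !iterD (@nx_down t (j - m.+1) j); try lia.
have -> : (j - (j - m.+1))%N = m.+1 by lia.
rewrite /= {2}/nx; ifs. rewrite nx_up; lia.
Qed.

Lemma sg_neq0 t j : sg t j != 0.
Proof.
rewrite /sg; ifs; rewrite ?oppr_eq0 ?oner_eq0 //.
by rewrite expf_neq0 // oppr_eq0 oner_eq0.
Qed.

Lemma sgp_neq0 (σ : nat -> F) g k j : (forall x, σ x != 0) -> sgp σ g k j != 0.
Proof. move=> H; elim: k => [|k IH] /=; first exact: oner_neq0. by rewrite mulf_neq0. Qed.

Definition piP j := iter m.-1 (nx 2) j.
Definition sP j := sgp (sg 2) (nx 2) m.-1 j.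
Definition pi0 j := iter m (nx 1) j.
Definition s0 j := sgp (sg 1) (nx 1) m j.

Hypothesis hm : (2 <= m)%N.

Lemma wP_act j : (1 <= j <= n)%N -> wPdot F m *m ecol j = sP j *: ecol (piP j).
Proof.
move=> Hj; rewrite /wPdot /wP_word.
have -> : iota 2 m.-1 = iota 2 (m - 2).+1 by congr iota; lia.
apply: pow_act => // x Hx; first (apply: cox_act; lia).
apply: nx_range; lia.
Qed.

Lemma w0_act j : (1 <= j <= n)%N -> w0dot F m *m ecol j = s0 j *: ecol (pi0 j).
Proof.
move=> Hj; rewrite /w0dot /w0_word.
have -> : iota 1 m = iota 1 (m - 1).+1 by congr iota; lia.
apply: pow_act => // x Hx; first (apply: cox_act; lia).
apply: nx_range; lia.
Qed.

Lemma piP_mid j : (2 <= j <= n.-1)%N -> piP j = (n.+1 - j)%N.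
Proof.
move=> Hj; have H := @nx_full 2 j ltac:(lia) ltac:(lia).
rewrite (_ : (m - 2).+1 = m.-1) in H; [exact H | lia].
Qed.
Lemma piP_1 : piP 1 = 1%N.
Proof. by rewrite /piP nx_lo. Qed.
Lemma piP_n : piP n = n.
Proof. rewrite /piP nx_hi //; lia. Qed.
Lemma pi0_all j : (1 <= j <= n)%N -> pi0 j = (n.+1 - j)%N.
Proof.
move=> Hj; have H := @nx_full 1 j ltac:(lia) ltac:(lia).
rewrite (_ : (m - 1).+1 = m) in H; [exact H | lia].
Qed.

Lemma sP_neq0 j : sP j != 0.
Proof. apply: sgp_neq0 => x; exact: sg_neq0. Qed.
Lemma s0_neq0 j : s0 j != 0.
Proof. apply: sgp_neq0 => x; exact: sg_neq0. Qed.

Lemma sP_1 : sP 1 = 1.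
Proof.
rewrite /sP; elim: m.-1 => [//|k IH] /=; rewrite IH nx_lo // /sg; ifs; by rewrite mulr1.
Qed.

Lemma sP_nm1 : sP n.-1 = 1.
Proof.
rewrite /sP; have : (m.-1 <= m.-1)%N by [].
elim: {1 3}m.-1 => [//|k IH] Hk /=; rewrite IH; last lia.
rewrite nx_down; try lia. rewrite /sg; ifs; by rewrite mulr1.
Qed.


Lemma ent1D (A B : M) i j : (1 <= i <= n)%N -> (1 <= j <= n)%N ->
  ent1 (A + B) i j = ent1 A i j + ent1 B i j.
Proof. by move=> /ordP_nat [r ->] /ordP_nat [s ->]; rewrite !ent1_ord mxE. Qed.
Lemma ent1Z (x : F) (A : M) i j : (1 <= i <= n)%N -> (1 <= j <= n)%N ->
  ent1 (x *: A) i j = x * ent1 A i j.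
Proof. by move=> /ordP_nat [r ->] /ordP_nat [s ->]; rewrite !ent1_ord mxE. Qed.
Lemma ent1N (A : M) i j : (1 <= i <= n)%N -> (1 <= j <= n)%N ->
  ent1 (- A) i j = - ent1 A i j.
Proof. by move=> /ordP_nat [r ->] /ordP_nat [s ->]; rewrite !ent1_ord mxE. Qed.
Lemma ent1_1 i j : (1 <= i <= n)%N -> (1 <= j <= n)%N ->
  ent1 (1%:M : M) i j = (i == j)%:R.
Proof. by move=> /ordP_nat [r ->] /ordP_nat [s ->]; rewrite !ent1_ord mxE eqSS. Qed.

Lemma ent1_mul_row (A B : M) i j p : (1 <= i <= n)%N -> (1 <= j <= n)%N -> (1 <= p <= n)%N ->
  (forall k, (1 <= k <= n)%N -> k != p -> ent1 A i k = 0) ->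
  ent1 (A *m B) i j = ent1 A i p * ent1 B p j.
Proof.
move=> /ordP_nat [r ->] /ordP_nat [s ->] /ordP_nat [q ->] H.
rewrite !ent1_ord mxE (bigD1 q) //= big1 ?addr0 // => k Hk.
have := H k.+1 (ltn_ord k); rewrite ent1_ord => ->; [by rewrite mul0r | by rewrite eqSS].
Qed.

Lemma ent1_mul_col (A B : M) i j p (x : F) : (1 <= i <= n)%N -> (1 <= j <= n)%N -> (1 <= p <= n)%N ->
  B *m ecol j = x *: ecol p -> ent1 (A *m B) i j = x * ent1 A i p.
Proof.
move=> Hi Hj Hp H; rewrite ent1_col // -mulmxA H -scalemxAr colentZ -ent1_col //.
Qed.

Lemma ent1_perm (B : M) i j p (x : F) : (1 <= i <= n)%N -> (1 <= j <= n)%N ->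
  B *m ecol j = x *: ecol p -> ent1 B i j = x * (i == p)%:R.
Proof. by move=> Hi Hj H; rewrite ent1_col // H colentZ colent_ecol. Qed.

Lemma f_sub i s : (1 <= i <= m)%N -> (1 <= s)%N -> (s.+1 <= n)%N ->
  ent1 (f_gen F m i) s.+1 s = ((s == i) || ((i < m)%N && (s == (n - i)%N)))%:R.
Proof.
move=> Hi Hs Hsn; rewrite ent1_col ?f_act; try lia.
case: ifP => Him; rewrite ?colentD !colentZ !colent_ecol; try lia.
  rewrite !eqSS [(i == s)]eq_sym [((n - i)%N == s)]eq_sym; case: (s =P i) => ?; case: (s =P (n - i)%N) => ?; rewrite /=; vsimp => //; exfalso; lia.
rewrite ?eqSS; case: (m =P s) => ?; case: (s =P i) => ?; case: (s =P m) => ?; rewrite /=; vsimp => //; exfalso; lia.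
Qed.

Lemma f_offsub i r s : (1 <= i <= m)%N -> (1 <= r <= n)%N -> (1 <= s <= n)%N -> r != s.+1 ->
  ent1 (f_gen F m i) r s = 0.
Proof.
move=> Hi Hr Hs Hrs; rewrite ent1_col ?f_act //.
case: ifP => Him; rewrite ?colentD !colentZ !colent_ecol; try lia.
  by case: (i =P s) => ?; case: (r =P i.+1) => ?; case: ((n - i)%N =P s) => ?;
     case: (r =P (n - i).+1) => ?; vsimp; try lia.
by case: (m =P s) => ?; case: (r =P m.+1) => ?; vsimp; try lia.
Qed.

End Infra.

Section Lists.
Variables (F : numClosedFieldType) (m : nat).
Hypothesis hm : (2 <= m)%N.
Local Notation n := (m.*2).
Local Notation M := 'M[F]_n.

Definition Nf (p : nat * F) : M := p.2 *: f_gen F m p.1.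
Definition lprod (l : seq (nat * F)) : M := foldr (fun p A => y_gen m p.1 p.2 *m A) 1%:M l.
Definition okl (l : seq (nat * F)) := all (fun p : nat * F => (1 <= p.1 <= m)%N) l.
Fixpoint topprod (l : seq (nat * F)) (r : nat) : F :=
  if l is p :: l' then ent1 (Nf p) r r.-1 * topprod l' r.-1 else 1.

Lemma lprod_cons p l : (1 <= p.1 <= m)%N -> lprod (p :: l) = (1%:M + Nf p) *m lprod l.
Proof. by move=> Hp; rewrite /= y_genE. Qed.

Lemma Nf_off p r s : (1 <= p.1 <= m)%N -> (1 <= r <= n)%N -> (1 <= s <= n)%N -> r != s.+1 ->
  ent1 (Nf p) r s = 0.
Proof. by move=> Hp Hr Hs Hrs; rewrite ent1Z // f_offsub // mulr0. Qed.

Lemma rec_ent p (P : M) r s : (1 <= p.1 <= m)%N -> (1 <= r <= n)%N -> (1 <= s <= n)%N ->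
  ent1 ((1%:M + Nf p) *m P) r s =
  ent1 P r s + (if (1 < r)%N then ent1 (Nf p) r r.-1 * ent1 P r.-1 s else 0).
Proof.
move=> Hp Hr Hs; rewrite mulmxDl mul1mx ent1D //; congr (_ + _).
case: ifP => H1.
  rewrite (@ent1_mul_row _ _ _ _ _ _ r.-1) //; try lia.
  move=> k Hk Hkr; apply: Nf_off => //; lia.
rewrite (@ent1_mul_row _ _ _ _ _ _ 1%N) //; try lia.
  rewrite Nf_off ?mul0r //; lia.
move=> k Hk Hkr; apply: Nf_off => //; lia.
Qed.

Lemma lprod_low l r s : okl l -> (1 <= r <= n)%N -> (1 <= s <= n)%N -> (r < s)%N ->
  ent1 (lprod l) r s = 0.
Proof.
elim: l r => [|p l IH] r /=; first by move=> _ Hr Hs Hrs; rewrite ent1_1 //; simpl_eqs.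
move=> /andP [Hp Hl] Hr Hs Hrs; rewrite -/(lprod l) y_genE // -/(Nf p) rec_ent // IH //.
rewrite add0r; case: ifP => // H1; rewrite IH ?mulr0 //; lia.
Qed.

Lemma lprod_diag l s : okl l -> (1 <= s <= n)%N -> ent1 (lprod l) s s = 1.
Proof.
elim: l => [|p l IH] /=; first by move=> _ Hs; rewrite ent1_1 // eqxx.
move=> /andP [Hp Hl] Hs; rewrite -/(lprod l) y_genE // -/(Nf p) rec_ent // IH //.
case: ifP => H1; last by rewrite addr0. have H2 : ent1 (lprod l) s.-1 s = 0 by apply: lprod_low; [exact: Hl | lia | lia | lia]. by rewrite H2 mulr0 addr0.
Qed.

Lemma lprod_band l r s : okl l -> (1 <= r <= n)%N -> (1 <= s <= n)%N -> (s + size l < r)%N ->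
  ent1 (lprod l) r s = 0.
Proof.
elim: l r => [|p l IH] r /=; first by move=> _ Hr Hs Hrs; rewrite ent1_1 //; simpl_eqs.
move=> /andP [Hp Hl] Hr Hs Hrs; rewrite -/(lprod l) y_genE // -/(Nf p) rec_ent // IH //; last lia.
rewrite add0r; case: ifP => H1 //; rewrite IH ?mulr0 //; lia.
Qed.

Lemma lprod_sub l s : okl l -> (1 <= s)%N -> (s.+1 <= n)%N ->
  ent1 (lprod l) s.+1 s = \sum_(p <- l) ent1 (Nf p) s.+1 s.
Proof.
elim: l => [|p l IH] /=.
  move=> _ Hs Hsn; rewrite big_nil ent1_1; [by simpl_eqs | lia | lia].
move=> /andP [Hp Hl] Hs Hsn; rewrite -/(lprod l) y_genE // -/(Nf p) rec_ent; [|exact: Hp|lia|lia].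
rewrite big_cons IH //; case: ifP => H1; last by exfalso; lia.
have H2 : ent1 (lprod l) s s = 1 by apply: lprod_diag; [exact: Hl | lia].
by rewrite H2 mulr1 addrC.
Qed.

Lemma lprod_top l s : okl l -> (1 <= s)%N -> (s + size l <= n)%N ->
  ent1 (lprod l) (s + size l) s = topprod l (s + size l).
Proof.
elim: l => [|p l IH] /=.
  by move=> _ Hs Hsn; rewrite addn0 ent1_1 ?eqxx //; lia.
move=> /andP [Hp Hl] Hs Hsn; rewrite -/(lprod l) y_genE // -/(Nf p) rec_ent; [|exact: Hp|lia|lia].
have H2 : ent1 (lprod l) (s + (size l).+1) s = 0 by apply: lprod_band; [exact: Hl|lia|lia|lia].
rewrite H2 add0r; case: ifP => H1; last by exfalso; lia.
have -> : (s + (size l).+1).-1 = (s + size l)%N by lia.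
by rewrite IH //; lia.
Qed.

Lemma lprod_cat l1 l2 : lprod (l1 ++ l2) = lprod l1 *m lprod l2.
Proof. elim: l1 => [|p l IH] /=; [by rewrite mul1mx | by rewrite IH mulmxA]. Qed.

Definition lneg (l : seq (nat * F)) := [seq (p.1, - p.2) | p <- rev l].

Lemma y_inv i (x : F) : (1 <= i <= m)%N -> y_gen m i x *m y_gen m i (- x) = 1%:M.
Proof.
move=> Hi; rewrite !y_genE // mulmxDl mul1mx mulmxDr mulmx1 -scalemxAl -scalemxAr ff0 //.
by rewrite !scaler0 addr0 scaleNr addrNK.
Qed.

Lemma lprod_inv l : okl l -> lprod l *m lprod (lneg l) = 1%:M.
Proof.
elim: l => [|p l IH] /=; first by rewrite mul1mx.
move=> /andP [Hp Hl].
rewrite /lneg rev_cons map_rcons -cats1 lprod_cat -/(lneg l) /= mulmx1.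
by rewrite -mulmxA (mulmxA (lprod l)) IH // mul1mx y_inv.
Qed.

Lemma topprod_cat l1 l2 r : topprod (l1 ++ l2) r = topprod l1 r * topprod l2 (r - size l1)%N.
Proof.
elim: l1 r => [|p l IH] r /=; first by rewrite mul1r subn0.
by rewrite IH mulrA (_ : (r.-1 - size l = r - (size l).+1)%N) //; lia.
Qed.

End Lists.

Section U.
Variables (F : numClosedFieldType) (m : nat) (a b : nat -> F) (c : F).
Hypothesis hm : (2 <= m)%N.
Local Notation n := (m.*2).
Local Notation M := 'M[F]_n.

Definition lU : seq (nat * F) :=
  [seq (i, a i) | i <- iota 1 m.-1] ++ (m, c) :: [seq (i, b i) | i <- rev (iota 1 m.-1)].

Lemma ubar2E : ubar2_of m a c b = lprod m lU.
Proof. by rewrite /lprod /lU foldr_cat /= !foldr_map. Qed.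

Lemma okU : okl m lU.
Proof.
rewrite /okl /lU all_cat /= !all_map; apply/and3P; split.
- by apply/allP => i; rewrite mem_iota /=; lia.
- by apply/andP; split => //; lia.
- by apply/allP => i; rewrite mem_rev mem_iota /=; lia.
Qed.

Lemma lnegU : lneg lU =
  [seq (i, - b i) | i <- iota 1 m.-1] ++ (m, - c) :: [seq (i, - a i) | i <- rev (iota 1 m.-1)].
Proof. by rewrite /lneg /lU rev_pivot map_cat /= -!map_rev revK -!map_comp. Qed.

Lemma okV : okl m (lneg lU).
Proof.
rewrite lnegU /okl all_cat /= !all_map; apply/and3P; split.
- by apply/allP => i; rewrite mem_iota /=; lia.
- by apply/andP; split => //; lia.
- by apply/allP => i; rewrite mem_rev mem_iota /=; lia.
Qed.

Lemma Nf_sub_low (p : nat * F) i : (1 <= p.1 <= m)%N -> (1 <= i <= m)%N ->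
  ent1 (Nf m p) i.+1 i = p.2 * (i == p.1)%:R.
Proof.
move=> Hp Hi; rewrite /Nf ent1Z ?f_sub //; try lia.
congr (_ * _%:R); case: (i =P p.1) => [//|Hne] /=.
by rewrite (_ : (i == (n - p.1)%N) = false) ?andbF //; apply/eqP; lia.
Qed.

Lemma sum_ind j : (1 <= j <= m)%N -> \sum_(1 <= i < m.+1) (i == j)%:R = 1 :> F.
Proof.
move=> Hj; rewrite (eq_bigr (fun i => if i == j then 1 else 0)) => [|i _]; last by case: (i == j).
by rewrite -big_mkcond big_nat1_eq; case: ifP => //; lia.
Qed.

Lemma U_sub : \sum_(1 <= i < m.+1) ent1 (lprod m lU) i.+1 i =
  \sum_(1 <= i < m) a i + c + \sum_(1 <= i < m) b i.
Proof.
rewrite big_nat_cond (eq_bigr (fun i => \sum_(p <- lU) p.2 * (i == p.1)%:R)); last first.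
  move=> i /andP [Hi _]; rewrite lprod_sub //; try exact: okU; try lia.
  rewrite [LHS]big_seq_cond [RHS]big_seq_cond; apply: eq_bigr => p /andP [Hp _].
  apply: Nf_sub_low; last lia.
  by move: okU => /allP /(_ p Hp).
rewrite -big_nat_cond exchange_big /=.
rewrite (eq_big_seq (fun p : nat * F => p.2)); last first.
  move=> p Hp; rewrite -mulr_sumr sum_ind ?mulr1 //.
  by move: okU => /allP /(_ p Hp).
rewrite /lU big_cat big_cons !big_map big_rev /= /index_iota subn1 addrA.
by [].
Qed.

Lemma Nf_n (p : nat * F) : (1 <= p.1 <= m)%N -> ent1 (Nf m p) n n.-1 = p.2 * (p.1 == 1)%N%:R.
Proof.
move=> Hp; have H := @Nf_off F m hm p.
rewrite /Nf ent1Z; try lia.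
have -> : n = (n.-1).+1 by lia.
rewrite f_sub //; try lia.
have -> : ((n.-1 == p.1) || ((p.1 < m)%N && (n.-1 == (n - p.1)%N))) = (p.1 == 1%N) => //.
apply/idP/idP.
  by move=> /orP [/eqP|/andP [_ /eqP]] => ?; apply/eqP; lia.
by move=> /eqP E; apply/orP; right; apply/andP; split; [lia | apply/eqP; lia].
Qed.

Lemma sum_iota1 (g : nat -> F) : \sum_(i <- iota 1 m.-1) g i * (i == 1)%N%:R = g 1.
Proof.
have -> : iota 1 m.-1 = 1%N :: iota 2 (m.-2) by rewrite (_ : m.-1 = (m.-2).+1); [|lia].
rewrite big_cons eqxx mulr1 big1_seq ?addr0 // => i /andP [_]; rewrite mem_iota => Hi.
by rewrite (_ : (i == 1)%N = false) ?mulr0 //; apply/eqP; lia.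
Qed.

Lemma V_sub : ent1 (lprod m (lneg lU)) n n.-1 = - (a 1%N + b 1%N).
Proof.
have H := @lprod_sub F m hm (lneg lU) n.-1 okV ltac:(lia) ltac:(lia).
rewrite prednK in H; last lia.
rewrite H (eq_big_seq (fun p : nat * F => p.2 * (p.1 == 1)%N%:R)); last first.
  by move=> p Hp; rewrite Nf_n //; move: okV => /allP /(_ p Hp).
rewrite lnegU big_cat big_cons !big_map big_rev /= !sum_iota1.
by simpl_eqs; rewrite mulr0 add0r opprD addrC.
Qed.

Lemma topB k L r : (1 <= k)%N -> (k + L <= m)%N -> r = (n.+1 - k)%N ->
  topprod m [seq (i, - b i) | i <- iota k L] r = \prod_(i <- iota k L) (- b i).
Proof.
elim: L k r => [|L IH] k r Hk HkL Hr; first by rewrite big_nil.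
rewrite /= big_cons IH; try lia; congr (_ * _).
rewrite /Nf ent1Z /=; try lia.
rewrite (_ : r = (n - k).+1); last lia.
rewrite f_sub //; try lia.
have H1 : ((n - k)%N == k) = false by apply/eqP; lia.
have H2 : (k < m)%N = true by lia.
by rewrite eqxx H1 H2 /= mulr1.
Qed.

Lemma topA L r : (L < m)%N -> r = L.+1 ->
  topprod m [seq (i, - a i) | i <- rev (iota 1 L)] r = \prod_(i <- iota 1 L) (- a i).
Proof.
elim: L r => [|L IH] r HL Hr; first by rewrite big_nil.
have E : iota 1 L.+1 = iota 1 L ++ [:: L.+1] by rewrite -{1}(addn1 L) iotaD add1n.
rewrite E rev_cat /= big_cat big_seq1 Hr /= (IH L.+1); [|lia|lia].
rewrite mulrC; congr (_ * _).
rewrite /Nf ent1Z /=; [|lia|lia].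
rewrite f_sub; first by rewrite eqxx /= mulr1.
all: lia.
Qed.

Lemma V_top : ent1 (lprod m (lneg lU)) n 1 =
  - (\prod_(1 <= i < m) a i * c * \prod_(1 <= i < m) b i).
Proof.
have H := @lprod_top F m hm (lneg lU) 1 okV ltac:(lia).
have Hs : size (lneg lU) = n.-1.
  by rewrite lnegU size_cat /= !size_map size_rev size_iota; lia.
rewrite Hs (_ : (1 + n.-1)%N = n) in H; last lia.
rewrite H; last lia.
rewrite lnegU topprod_cat.
have -> : size [seq (i, - b i) | i <- iota 1 m.-1] = m.-1 by rewrite size_map size_iota.
rewrite (@topB 1 m.-1 n); [|lia|lia|lia].
rewrite (_ : (n - m.-1)%N = m.+1); last lia.
rewrite [topprod _ (_ :: _) _]/= (@topA m.-1 m); [|lia|lia].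
rewrite /Nf ent1Z /=; [|lia|lia].
rewrite f_sub; [| lia | lia | lia | lia].
rewrite eqxx /= mulr1.
have PbPa : \prod_(i <- iota 1 m.-1) (- b i) * \prod_(i <- iota 1 m.-1) (- a i) =
   \prod_(i <- iota 1 m.-1) b i * \prod_(i <- iota 1 m.-1) a i.
  by rewrite -!big_split /=; apply: eq_bigr => i _; rewrite mulrNN.
rewrite /index_iota subn1 mulrCA PbPa; first ring.
all: lia.
Qed.

End U.

Section Main.
Variables (F : numClosedFieldType) (m : nat).
Hypothesis hm : (2 <= m)%N.
Local Notation n := (m.*2).
Local Notation M := 'M[F]_n.
Local Notation ecol := (ecol F m).

Lemma x_inv i (x : F) : (1 <= i <= m)%N -> x_gen m i x *m x_gen m i (- x) = 1%:M.
Proof.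
move=> Hi; rewrite !x_genE // mulmxDl mul1mx mulmxDr mulmx1 -scalemxAl -scalemxAr ee0 //.
by rewrite !scaler0 addr0 scaleNr addrNK.
Qed.

Lemma sdot_unit i : (1 <= i <= m)%N -> sdot F m i \in unitmx.
Proof.
move=> Hi; rewrite /sdot !unitmx_mul.
have [Hy _] := mulmx1_unit (@y_inv F m i (-1) Hi).
have [Hx _] := mulmx1_unit (x_inv 1 Hi).
by rewrite Hy Hx.
Qed.

Lemma wdot_unit w : all (fun i => (1 <= i <= m)%N) w -> wdot F m w \in unitmx.
Proof.
elim: w => [|i w IH] /=; first by rewrite unitmx1.
by move=> /andP [Hi Hw]; rewrite unitmx_mul sdot_unit // IH.
Qed.

Lemma wP_unit : wPdot F m \in unitmx.
Proof.
apply: wdot_unit; apply/allP => i; rewrite /wP_word => /flattenP [s /nseqP [-> _]].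
by rewrite mem_iota; lia.
Qed.

Lemma ent1_upper (A : M) i j : upper_tri A -> (1 <= j)%N -> (j < i)%N -> (i <= n)%N ->
  ent1 A i j = 0.
Proof.
move=> HA Hj Hji Hin.
have [r Er] := @ordP_nat m i ltac:(lia). have [s Es] := @ordP_nat m j ltac:(lia).
rewrite Er Es ent1_ord; apply/eqP.
by move: HA => /forallP /(_ r) /forallP /(_ s) /implyP; apply; lia.
Qed.

Lemma ent1_lower (A : M) i j : lower_tri A -> (1 <= i)%N -> (i < j)%N -> (j <= n)%N ->
  ent1 A i j = 0.
Proof.
move=> HA Hi Hij Hjn.
have [r Er] := @ordP_nat m i ltac:(lia). have [s Es] := @ordP_nat m j ltac:(lia).
rewrite Er Es ent1_ord; apply/eqP.
by move: HA => /forallP /(_ r) /forallP /(_ s) /implyP; apply; lia.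
Qed.

Lemma ent1_diag1 (A : M) i : unitri_diag A -> (1 <= i <= n)%N -> ent1 A i i = 1.
Proof.
move=> HA Hi; have [r ->] := @ordP_nat m i Hi.
by rewrite ent1_ord; apply/eqP; move: HA => /forallP.
Qed.

Lemma d_diag (d : M) j : in_T d -> (1 <= j <= n)%N -> d *m ecol j = ent1 d j j *: ecol j.
Proof.
move=> Hd Hj; have [s ->] := @ordP_nat m j Hj.
apply/colP => r; rewrite mul_ecol_ord !mxE ent1_ord eqSS.
case: (eqVneq r s) => [->|Hrs]; first by rewrite eqxx mulr1.
rewrite (negbTE (Hrs : (r : nat) != s)) mulr0.
by move: Hd => /andP [/forallP /(_ r) /forallP /(_ s) /implyP /(_ Hrs) /eqP -> _].
Qed.

Lemma d_pair (d : M) k : in_T d -> (1 <= k <= n)%N ->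
  ent1 d k k * ent1 d (n.+1 - k) (n.+1 - k) = 1.
Proof.
move=> Hd Hk; have [i Ei] := @ordP_nat m k Hk.
move: Hd => /andP [_ /forallP /(_ i) /eqP H].
rewrite Ei ent1_ord -H; congr (_ * _).
by rewrite /ent1 (_ : ((n.+1 - i.+1).-1 = n - i.+1)%N) //; lia.
Qed.

Lemma sdot_i i : (1 <= i <= m)%N -> sdot F m i *m ecol i = (-1) *: ecol i.+1.
Proof.
move=> Hi; rewrite sdot_act //; last lia.
rewrite /ss /sp; case: (ltnP i m) => H.
  by rewrite eqxx.
have Ei : i = m by lia.
by rewrite Ei eqxx.
Qed.

Lemma sdot_1 i : (2 <= i <= m)%N -> sdot F m i *m ecol 1 = 1 *: ecol 1.
Proof.
move=> Hi; rewrite sdot_act //; try lia.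
rewrite /ss /sp; case: ifP => H; simpl_eqs; by [].
Qed.

Lemma d_chain (d : M) i : in_TWP d -> (2 <= i <= m)%N -> ent1 d i i = ent1 d i.+1 i.+1.
Proof.
move=> /andP [HT Hall] Hi.
have Hi' : i \in iota 2 m.-1 by rewrite mem_iota; lia.
have Hir : (1 <= i <= n)%N by lia.
have Hi1r : (1 <= i.+1 <= n)%N by lia.
have H1r : (1 <= 1 <= n)%N by lia.
have L1 : ent1 (sdot F m i *m d) i.+1 i = - ent1 d i i.
  rewrite (ent1_mul_col _ Hi1r Hir Hir (d_diag HT Hir)).
  by rewrite (ent1_perm Hi1r Hir (@sdot_i i ltac:(lia))) eqxx mulr1 mulrN1.
have L2 : ent1 (d *m sdot F m i) i.+1 i = - ent1 d i.+1 i.+1.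
  by rewrite (ent1_mul_col _ Hi1r Hir Hi1r (@sdot_i i ltac:(lia))) mulN1r.
have M1 : ent1 (sdot F m i *m d) 1 1 = ent1 d 1 1.
  rewrite (ent1_mul_col _ H1r H1r H1r (d_diag HT H1r)).
  by rewrite (ent1_perm H1r H1r (sdot_1 Hi)) eqxx !mulr1.
have M2 : ent1 (d *m sdot F m i) 1 1 = ent1 d 1 1.
  by rewrite (ent1_mul_col _ H1r H1r H1r (sdot_1 Hi)) mul1r.
move: Hall => /allP /(_ i Hi') /orP [/eqP E|/eqP E].
  by apply: oppr_inj; rewrite -L1 -L2 E.
exfalso.
have : ent1 d 1 1 = - ent1 d 1 1 by rewrite -{1}M1 E ent1N // M2.
move=> /eqP; rewrite -addr_eq0 -mulr2n mulrn_eq0 /= => /eqP H0.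
have := d_pair HT H1r; rewrite H0 mul0r => /eqP; by rewrite eq_sym oner_eq0.
Qed.

Lemma d2sq (d : M) : in_TWP d -> ent1 d 2 2 * ent1 d 2 2 = 1.
Proof.
move=> Hd; have HT : in_T d by case/andP: Hd.
have chain : forall k, (2 <= k <= m.+1)%N -> ent1 d k k = ent1 d 2 2.
  elim=> [|k IH] Hk; first lia.
  case: (eqVneq k 1%N) => [->//|Hk1].
  by rewrite -d_chain //; try lia; apply: IH; lia.
have Hm : (1 <= m <= n)%N by lia.
have := d_pair HT Hm; rewrite (_ : (n.+1 - m = m.+1)%N); last lia.
have C1 := chain m ltac:(lia). have C2 := chain m.+1 ltac:(lia).
by rewrite C1 C2.
Qed.

Lemma d_nm1 (d : M) : in_T d -> ent1 d n.-1 n.-1 * ent1 d 2 2 = 1.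
Proof.
move=> HT; have H2 : (1 <= 2 <= n)%N by lia.
have := d_pair HT H2; rewrite (_ : (n.+1 - 2 = n.-1)%N); last lia.
by rewrite mulrC.
Qed.

Lemma piP_range j : (1 <= j <= n)%N -> (1 <= piP m j <= n)%N.
Proof. move=> Hj; apply: iter_range => // x Hx; apply: nx_range; lia. Qed.

End Main.

Unset Implicit Arguments.

Theorem mainTheorem6 (F : numClosedFieldType) (m : nat) (hm : (2 <= m)%N)
    (d u1 : 'M[F]_(m.*2)) (a b : nat -> F) (c : F) :
  in_TWP d ->
  in_Uplus u1 ->
  in_Uplus (invmx (wPdot F m) *m u1 *m wPdot F m) ->
  (forall i, (1 <= i < m)%N -> a i != 0) ->
  (forall i, (1 <= i < m)%N -> b i != 0) ->
  c != 0 ->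
  (* z = u1 wP d ubar2 lies in B_- w0 *)
  (exists bm : 'M[F]_(m.*2), [/\ lower_tri bm, in_Sp bm &
      u1 *m wPdot F m *m d *m ubar2_of m a c b = bm *m w0dot F m]) ->
  superpot u1 (ubar2_of m a c b) =
    \sum_(1 <= i < m) a i + c + \sum_(1 <= i < m) b i
    + alpha1 d * (a 1%N + b 1%N)
        / ((\prod_(1 <= i < m) a i) * c * \prod_(1 <= i < m) b i).
Proof.
move=> Hd HU1 HC Ha Hb Hc [bm [Hbm _ Hz]].
have HdT : in_T d by case/andP: Hd.
case/and3P: HU1 => _ _ Hu1d.
case/and3P: HC => _ HCup _.
have Hzero : forall i, (2 <= i <= m)%N -> ent1 u1 i i.+1 = 0.
  move=> i Hi.
  have Hir : (1 <= i <= m.*2)%N by lia.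
  have Hjr : (1 <= m.*2 - i <= m.*2)%N by lia.
  have Hpr : (1 <= piP m (m.*2 - i) <= m.*2)%N by rewrite (piP_mid hm); lia.
  have HWC : u1 *m wPdot F m = wPdot F m *m (invmx (wPdot F m) *m u1 *m wPdot F m).
    by rewrite !mulmxA mulmxV ?mul1mx // wP_unit.
  have E := congr1 (fun A => ent1 A i (m.*2 - i)) HWC; move: E => /=.
  rewrite (ent1_mul_col u1 Hir Hjr Hpr (wP_act F hm Hjr)) (piP_mid hm); last lia.
  have -> : ((m.*2).+1 - (m.*2 - i) = i.+1)%N by lia.
  have Hnr : (1 <= (m.*2).+1 - i <= m.*2)%N by lia.
  rewrite (ent1_mul_row _ Hir Hjr Hnr); last first.
    move=> k Hk Hki; rewrite (ent1_perm Hir Hk (wP_act F hm Hk)).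
    rewrite (_ : (i == piP m k) = false) ?mulr0 //.
    apply/negbTE/eqP => Heq.
    case: (ltnP 1 k) => Hk1; first case: (ltnP k (m.*2)) => Hkn.
    - by rewrite (piP_mid hm) in Heq; lia.
    - have Ekn : k = m.*2 by lia.
      by rewrite Ekn piP_n in Heq; lia.
    - have Ek1 : k = 1%N by lia.
      by rewrite Ek1 piP_1 in Heq; lia.
  rewrite (ent1_upper hm HCup) ?mulr0; [| lia | lia | lia].
  by move/eqP; rewrite mulf_eq0 (negbTE (sP_neq0 _ _ _)) /= => /eqP.
rewrite /superpot ubar2E (U_sub _ _ _ hm).
rewrite [\sum_(1 <= i < m.+1) _]big_ltn; last lia.
rewrite [\sum_(2 <= i < m.+1) _]big1_seq ?addr0; last first.
  by move=> i /andP [_]; rewrite mem_index_iota => Hi; apply: Hzero; lia.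
rewrite addrC; congr (_ + _).
set V := lprod m (lneg (lU m a b c)).
have HUV : lprod m (lU m a b c) *m V = 1%:M := lprod_inv (okU a b c hm).
rewrite ubar2E in Hz.
have HR : u1 *m wPdot F m *m d = bm *m w0dot F m *m V by rewrite -Hz -(mulmxA _ (lprod m (lU m a b c))) HUV mulmx1.
have Hn1 : (1 <= 1 <= m.*2)%N by lia.
have Hnn : (1 <= m.*2 <= m.*2)%N by lia.
have Hnm1 : (1 <= (m.*2).-1 <= m.*2)%N by lia.
have Hrow : forall j, (1 <= j <= m.*2)%N -> ent1 (bm *m w0dot F m *m V) 1 j =
    (ent1 bm 1 1 * ent1 (w0dot F m) 1 (m.*2)) * ent1 V (m.*2) j.
  move=> j Hj; rewrite -mulmxA (ent1_mul_row _ Hn1 Hj Hn1); last first.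
    by move=> k Hk Hk1; apply: (ent1_lower hm Hbm); lia.
  rewrite (ent1_mul_row _ Hn1 Hj Hnn) ?mulrA //.
  move=> k Hk Hkn; rewrite (ent1_perm Hn1 Hk (w0_act F hm Hk)) (pi0_all hm Hk).
  by rewrite (_ : (1 == (m.*2).+1 - k)%N = false) ?mulr0 //; apply/eqP; lia.
have Hcol : forall j, (1 <= j <= m.*2)%N -> ent1 (u1 *m wPdot F m *m d) 1 j =
    ent1 d j j * (sP F m j * ent1 u1 1 (piP m j)).
  move=> j Hj; have Hp := piP_range hm Hj.
  by rewrite (ent1_mul_col _ Hn1 Hj Hj (d_diag HdT Hj)) (ent1_mul_col u1 Hn1 Hj Hp (wP_act F hm Hj)).
have E1 := Hcol 1%N Hn1.
rewrite HR Hrow // piP_1 (sP_1 F hm) (ent1_diag1 Hu1d Hn1) (V_top _ _ _ hm) in E1.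
have E2 := Hcol (m.*2).-1 Hnm1.
rewrite HR Hrow // (piP_mid hm) ?(sP_nm1 F hm) ?(V_sub _ _ _ hm) in E2; last lia.
rewrite (_ : ((m.*2).+1 - (m.*2).-1 = 2)%N) in E2; last lia.
have Hd22 := d2sq hm Hd.
have Hdn := d_nm1 hm HdT.
have Hpa : \prod_(1 <= i < m) a i != 0.
  by rewrite prodf_seq_neq0; apply/allP => i; rewrite mem_index_iota => Hi /=; apply: Ha.
have Hpb : \prod_(1 <= i < m) b i != 0.
  by rewrite prodf_seq_neq0; apply/allP => i; rewrite mem_index_iota => Hi /=; apply: Hb.
have HP : \prod_(1 <= i < m) a i * c * \prod_(1 <= i < m) b i != 0 by rewrite !mulf_neq0.
move: E1 E2 Hd22 Hdn HP; rewrite /alpha1.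
set L := ent1 bm 1 1 * ent1 (w0dot F m) 1 (m.*2).
set P := \prod_(1 <= i < m) a i * c * \prod_(1 <= i < m) b i.
set x := ent1 u1 1 2.
set d1 := ent1 d 1 1. set d2 := ent1 d 2 2. set dn := ent1 d (m.*2).-1 (m.*2).-1.
move=> E1 E2 Hd22 Hdn HP.
have d2nz : d2 != 0 by apply/negP => /eqP H0; move: Hd22; rewrite H0 mul0r => /eqP; rewrite eq_sym oner_eq0.
have Hinv : d2^-1 = d2 by apply: (mulfI d2nz); rewrite mulfV // Hd22.
have Hx : x = d2 * (L * - (a 1%N + b 1%N)) by rewrite E2 mul1r mulrA (mulrC d2) Hdn mul1r.
have Hd1 : d1 = L * - P by rewrite E1 !mulr1.
rewrite Hx Hd1 Hinv; field.
by [].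
Qed.
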